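(* Let $v$ be a flow on a surface $S$. Every circuit with wandering holonomy is not a periodic orbit, and it contains a point of $\Omega(v)-\overline{\mathrm{Cl}(v)}$.
   Context: Surface: 2-dimensional paracompact manifold. $\mathrm{Cl}(v)$ is the union of singular points and periodic orbits; $\Omega(v)$ the set of non-wandering points. A separatrix is a non-singular orbit whose $\alpha$- or $\omega$-limit set is a singular point. A non-trivial circuit is the image of an oriented circle under a continuous orientation-preserving map which is either a periodic orbit, or a directed graph (not a singleton) that is a union of separatrices and finitely many singular points. A circuit with wandering holonomy is a non-trivial circuit $\gamma$ for which there are a non-singular point $x\in\gamma$ and arbitrarily small open transverse arcs $I$ containing $x$ such that the (partially defined) first return map on $I$ is orientation-reversing, has nonempty domain, and its domain and image are disjoint. *)

(* Defs.v *)
From HB Require Import structures.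
From mathcomp Require Import all_boot all_order all_algebra.
From mathcomp Require Import all_classical all_reals all_analysis.
From mathcomp Require Import Rstruct Rstruct_topology.
Set Implicit Arguments. Unset Strict Implicit. Unset Printing Implicit Defensive.
Import Order.TTheory GRing.Theory Num.Theory.
Local Open Scope classical_set_scope.
Local Open Scope ring_scope.

Notation R := Rdefinitions.R.

Definition paracompact (S : topologicalType) : Prop :=
  forall (I : Type) (U : I -> set S),
    (forall i, open (U i)) -> \bigcup_(i in setT) U i = setT ->
    exists (J : Type) (W : J -> set S),
      (forall j, open (W j)) /\ \bigcup_(j in setT) W j = setT /\
      (forall j, exists i, W j `<=` U i) /\
      (forall x : S, exists N, nbhs x N /\ finite_set [set j | W j `&` N !=set0]).

Definition locally_euclidean2 (S : topologicalType) : Prop :=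
  forall x : S, exists (U : set S) (phi : S -> R * R),
    open U /\ U x /\
    {within U, continuous phi} /\ {in U &, injective phi} /\
    (forall A, open A -> A `<=` U -> open (phi @` A)).

Definition surface (S : topologicalType) : Prop :=
  hausdorff_space S /\ paracompact S /\ locally_euclidean2 S.

Definition is_flow (S : topologicalType) (v : R -> S -> S) : Prop :=
  continuous (fun p : R * S => v p.1 p.2) /\
  (forall x, v 0 x = x) /\
  (forall s t x, v (s + t) x = v s (v t x)).

Section FlowNotions.
Variables (S : topologicalType) (v : R -> S -> S).

Definition orbit (x : S) : set S := range (fun t => v t x).

Definition singular (x : S) : Prop := forall t, v t x = x.

Definition periodic_point (x : S) : Prop :=
  ~ singular x /\ exists T, 0 < T /\ v T x = x.

Definition periodic_orbit (P : set S) : Prop :=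
  exists x, periodic_point x /\ P = orbit x.

Definition Cl : set S := [set x | singular x \/ periodic_point x].

Definition nonwandering (x : S) : Prop :=
  forall U, nbhs x U -> forall T : R,
    exists t, T < t /\ exists y, U y /\ U (v t y).

Definition omega_limit (x : S) : set S :=
  [set y | forall T : R, closure [set v t x | t in [set t | T <= t]] y].
Definition alpha_limit (x : S) : set S :=
  [set y | forall T : R, closure [set v t x | t in [set t | t <= T]] y].

Definition separatrix (x : S) : Prop :=
  ~ singular x /\
  ((exists p, singular p /\ omega_limit x = [set p]) \/
   (exists p, singular p /\ alpha_limit x = [set p])).

(* an oriented circle is parameterized as a 1-periodic map R -> S;
   orientation preserving: near every parameter whose image is non-singular,
   the map moves along the orbit in the forward time direction *)
Definition orientation_preserving (f : R -> S) : Prop :=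
  forall th, ~ singular (f th) ->
    exists delta : R, 0 < delta /\ exists tau : R -> R,
      tau 0 = 0 /\
      (forall s1 s2, - delta < s1 -> s1 <= s2 -> s2 < delta -> tau s1 <= tau s2) /\
      (forall s, - delta < s -> s < delta -> f (th + s) = v (tau s) (f th)).

Definition nontrivial_circuit (g : set S) : Prop :=
  exists f : R -> S,
    continuous f /\ (forall th, f (th + 1) = f th) /\
    orientation_preserving f /\ g = range f /\
    (periodic_orbit g \/
     ((exists (P : set S) (E : set S),
          finite_set P /\ (forall p, P p -> singular p) /\
          (forall e, E e -> separatrix e) /\
          g = P `|` \bigcup_(e in E) orbit e) /\
      ~ (exists p, g = [set p]))).

(* open arcs: images of embeddings R -> S *)
Definition open_arc (h : R -> S) : Prop :=
  continuous h /\ injective h /\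
  (forall A : set R, open A -> exists B : set S, open B /\ h @` A = B `&` range h).

(* transverse open arc: there is a flow box (t,s) |-> v t (h s) on
   ]-eps,eps[ x R which is a homeomorphism onto an open set *)
Definition transverse_arc (h : R -> S) : Prop :=
  open_arc h /\
  exists eps : R, 0 < eps /\
    let D := [set p : R * R | - eps < p.1 /\ p.1 < eps] in
    let F := fun p : R * R => v p.1 (h p.2) in
    (forall p q, D p -> D q -> F p = F q -> p = q) /\
    (forall A, open A -> A `<=` D -> open (F @` A)).

(* the (partially defined) first return map on I, as a relation *)
Definition first_return (I : set S) (y z : S) : Prop :=
  I y /\ exists t, 0 < t /\ v t y = z /\ I z /\
    (forall s, 0 < s -> s < t -> ~ I (v s y)).

Definition return_dom (I : set S) : set S := [set y | exists z, first_return I y z].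
Definition return_img (I : set S) : set S := [set z | exists y, first_return I y z].

Definition return_orientation_reversing (h : R -> S) : Prop :=
  forall a b a' b', first_return (range h) (h a) (h a') ->
    first_return (range h) (h b) (h b') -> a < b -> b' < a'.

Definition circuit_with_wandering_holonomy (g : set S) : Prop :=
  nontrivial_circuit g /\
  exists x, g x /\ ~ singular x /\
    forall U, nbhs x U ->
      exists h : R -> S,
        transverse_arc h /\ range h `<=` U /\ range h x /\
        return_orientation_reversing h /\
        return_dom (range h) !=set0 /\
        return_dom (range h) `&` return_img (range h) = set0.

End FlowNotions.

(* Main.v *)
Require Import Defs.
From HB Require Import structures.
From mathcomp Require Import all_boot all_order all_algebra.
From mathcomp Require Import all_classical all_reals all_analysis.
From mathcomp Require Import Rstruct Rstruct_topology.
From mathcomp Require Import lra.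
Set Implicit Arguments. Unset Strict Implicit. Unset Printing Implicit Defensive.
Import Order.TTheory GRing.Theory Num.Theory.
Local Open Scope classical_set_scope.
Local Open Scope ring_scope.

Lemma flowC (S : topologicalType) (v : R -> S -> S) (hv : is_flow v) t s x :
  v t (v s x) = v (t + s) x.
Proof. by case: hv => _ [_ ->]. Qed.

Lemma flow0 (S : topologicalType) (v : R -> S -> S) (hv : is_flow v) x :
  v 0 x = x.
Proof. by case: hv => _ [->]. Qed.

Lemma box_inj (S : topologicalType) (v : R -> S -> S) (h : R -> S) (eps : R)
  (inj : forall p q : R * R, - eps < p.1 /\ p.1 < eps -> - eps < q.1 /\ q.1 < eps ->
     v p.1 (h p.2) = v q.1 (h q.2) -> p = q)
  s1 r1 s2 r2 : `|s1| < eps -> `|s2| < eps -> v s1 (h r1) = v s2 (h r2) ->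
  s1 = s2 /\ r1 = r2.
Proof.
move=> h1 h2 e.
have := inj (s1, r1) (s2, r2).
rewrite ltr_norml in h1; rewrite ltr_norml in h2.
case/andP: h1 => a b; case/andP: h2 => c d.
by move=> /(_ (conj a b) (conj c d) e) [-> ->].
Qed.

Lemma min_lemma (P : set R) (e : R) : 0 < e -> P !=set0 ->
  (forall t, P t -> 0 < t) ->
  (forall t t', P t -> P t' -> `|t - t'| < e -> t = t') ->
  exists t1, P t1 /\ forall t, P t -> t1 <= t.
Proof.
move=> e0 [t0 Pt0] pos sep.
have hlb : has_lbound P by exists 0 => t /pos /ltW.
have hinf : has_inf P by split => //; exists t0.
have [t1 Pt1 t1lt] := inf_adherent e0 hinf.
exists t1; split => // t Pt.
have le1 := ge_inf hlb Pt1; have le2 := ge_inf hlb Pt.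
rewrite leNgt; apply/negP => tlt.
have : t = t1.
  apply: sep => //; rewrite ltr_norml; apply/andP; split; lra.
lra.
Qed.

Lemma not_Cl_box (S : topologicalType) (v : R -> S -> S) (hv : is_flow v)
  (h : R -> S) (eps : R) (eps0 : 0 < eps)
  (inj : forall p q : R * R, - eps < p.1 /\ p.1 < eps -> - eps < q.1 /\ q.1 < eps ->
     v p.1 (h p.2) = v q.1 (h q.2) -> p = q)
  (wand : return_dom v (range h) `&` return_img v (range h) = set0)
  s r : `|s| < eps -> ~ Cl v (v s (h r)).
Proof.
move=> hs.
have bi := @box_inj S v h eps inj.
have e0 : `|0 : R| < eps by rewrite normr0.
have noret : forall t a b, `|t| < eps -> v t (h a) = h b -> t = 0.
  move=> t a b ht e; have := bi t a 0 b ht e0.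
  by rewrite flow0 // => /(_ e) [].
set y := h r.
have yp : y = v (- s) (v s y) by rewrite flowC // addNr flow0.
case => [sg|[nsg [T [T0 hT]]]].
  have ys : y = v s y by rewrite yp sg.
  have e2 : `|eps / 2| < eps.
    rewrite ger0_norm; last by apply: divr_ge0 => //; apply: ltW.
    lra.
  have := noret (eps / 2) r r e2.
  have -> : v (eps/2) (h r) = h r.
    by rewrite -/y ys sg.
  move=> /(_ erefl) => h2; lra.
have hTy : v T y = y.
  by rewrite yp flowC // addrC -flowC // hT.
pose P := [set t | 0 < t /\ range h (v t y)].
have [t1 [[t1p t1r] t1min]] : exists t1, P t1 /\ forall t, P t -> t1 <= t.
  apply: (min_lemma eps0).
  - by exists T; split => //; rewrite hTy; exists r.
  - by move=> t [].
  move=> t t' [_ [a _ ha]] [_ [b _ hb]] htt.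
  have : v (t' - t) (h a) = h b by rewrite ha flowC // subrK.
  move=> /(noret _ _ _); rewrite distrC in htt => /(_ htt) => e.
  by apply/eqP; rewrite eq_sym -subr_eq0; apply/eqP.
pose Q := [set t | 0 < t /\ range h (v (- t) y)].
have [s1 [[s1p s1r] s1min]] : exists t1, Q t1 /\ forall t, Q t -> t1 <= t.
  apply: (min_lemma eps0).
  - by exists T; split => //; rewrite -{1}hTy flowC // addNr flow0 //; exists r.
  - by move=> t [].
  move=> t t' [_ [a _ ha]] [_ [b _ hb]] htt.
  have : v (t - t') (h a) = h b by rewrite ha flowC // hb; congr v; lra.
  move=> /(noret _ _ _ htt) e.
  by apply/eqP; rewrite -subr_eq0; apply/eqP.
have yd : return_dom v (range h) y.
  exists (v t1 y); split; first by exists r.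
  exists t1; split => //; split => //; split => // u u0 ut1 hu.
  have := t1min u (conj u0 hu); lra.
have yi : return_img v (range h) y.
  exists (v (- s1) y); split => //.
  exists s1; split => //; split; first by rewrite flowC // addrN flow0.
  split; first by exists r.
  move=> u u0 us1 hu.
  have : Q (s1 - u).
    split; first lra.
    by rewrite -(_ : u + - s1 = - (s1 - u)); [rewrite -flowC|rewrite opprB addrC].
  move=> /s1min; lra.
have : (return_dom v (range h) `&` return_img v (range h)) y by [].
by rewrite wand.
Qed.

Lemma cont_eps (f : R -> R) c e : {for c, continuous f} -> 0 < e ->
  exists2 d, 0 < d & forall u, `|c - u| < d -> `|f c - f u| < e.
Proof.
move=> fc e0; have := @cvgr_dist_lt _ R^o _ _ _ f (f c) fc e e0.
move=> H.
have := (nbhs_normP (V:=R^o) c (fun u => `|f c - f u| < e)).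
move=> [H1 _]. have := H1 (H (nbhs_filter c)).
case => d d0 sub; exists d => // u hu; exact: sub.
Qed.

Lemma within_itv (g : R -> R) a b l r :
  (forall u, a <= u -> u <= b -> {for u, continuous g}) -> a <= l -> r <= b ->
  {within `[l, r], continuous g}.
Proof.
move=> gc al rb; apply: continuous_in_subspaceT => u.
rewrite inE /= in_itv /= => /andP [h1 h2]; apply: gc.
  exact: le_trans al h1.
exact: le_trans h2 rb.
Qed.

Lemma mk5 (a b u1 u2 : R) : a <= u1 -> u1 <= b -> a <= u2 -> u2 <= b ->
  u1 < u2 -> [/\ a <= u1, u1 <= b, a <= u2, u2 <= b & u1 != u2].
Proof. by move=> *; split => //; rewrite lt_eqF. Qed.

Lemma mk5' (a b u1 u2 : R) : a <= u1 -> u1 <= b -> a <= u2 -> u2 <= b ->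
  u2 < u1 -> [/\ a <= u1, u1 <= b, a <= u2, u2 <= b & u1 != u2].
Proof. by move=> *; split => //; rewrite gt_eqF. Qed.

Lemma local_fold (g s : R -> R) a b c e : a < c -> c < b -> 0 < e ->
 (forall u, a <= u -> u <= b -> {for u, continuous g}) ->
 {for c, continuous s} -> (forall t, a <= t -> t <= b -> g t <= g c) ->
 exists u1 u2, [/\ a <= u1, u1 <= b, a <= u2, u2 <= b & u1 != u2] /\
   g u1 = g u2 /\ `|s u1 - s u2| < e.
Proof.
move=> ac cb e0 gc sc gmax.
have e20 : 0 < e / 2 by lra.
have [d d0 hd] := cont_eps sc e20.
have [l [al [lc cld]]] : exists l, a <= l /\ l < c /\ c - l < d.
  case: (lerP a (c - d/2)) => h; [exists (c - d/2) | exists a]; lra.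
have [r [rb [cr rcd]]] : exists r, r <= b /\ c < r /\ r - c < d.
  case: (lerP (c + d/2) b) => h; [exists (c + d/2) | exists b]; lra.
have close : forall u1 u2, l <= u1 -> u1 <= r -> l <= u2 -> u2 <= r ->
    `|s u1 - s u2| < e.
  move=> u1 u2 h1 h2 h3 h4.
  have k1 : `|s c - s u1| < e / 2.
    by apply: hd; rewrite ltr_norml; apply/andP; split; lra.
  have k2 : `|s c - s u2| < e / 2.
    by apply: hd; rewrite ltr_norml; apply/andP; split; lra.
  move: k1 k2; rewrite !ltr_norml => /andP [k1 k1'] /andP [k2 k2'].
  by apply/andP; split; lra.
have gl : g l <= g c by apply: gmax; lra.
have gr : g r <= g c by apply: gmax; lra.
case: (eqVneq (g l) (g c)) => El.
  exists l, c; split; first by apply: mk5; lra.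
  by split => //; apply: close; lra.
case: (eqVneq (g r) (g c)) => Er.
  exists c, r; split; first by apply: mk5; lra.
  by split => //; apply: close; lra.
have gl' : g l < g c by rewrite lt_neqAle El.
have gr' : g r < g c by rewrite lt_neqAle Er.
have key : forall m, g l <= m -> g r <= m -> m < g c -> exists u1 u2,
   [/\ a <= u1, u1 <= b, a <= u2, u2 <= b & u1 != u2] /\
   g u1 = g u2 /\ `|s u1 - s u2| < e.
  move=> m h1 h2 h3.
  have [u1 u1i gu1] : exists2 u1, u1 \in `[l, c] & g u1 = m.
    apply: IVT; first lra.
      by apply: (within_itv gc); lra.
    by rewrite ge_min le_max h1 (ltW h3) orbT.
  have [u2 u2i gu2] : exists2 u2, u2 \in `[c, r] & g u2 = m.
    apply: IVT; first lra.
      by apply: (within_itv gc); lra.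
    by rewrite ge_min le_max h2 (ltW h3) !orbT.
  move: u1i u2i; rewrite !in_itv /= => /andP [p1 p2] /andP [p3 p4].
  have u1c : u1 != c by apply/eqP => E; move: h3; rewrite -gu1 E ltxx.
  have u1c' : u1 < c by rewrite lt_neqAle u1c.
  exists u1, u2; split.
    by apply: mk5; lra.
  by split; [rewrite gu1 gu2 | apply: close; lra].
case: (lerP (g l) (g r)) => H.
  by apply: (key (g r)).
by apply: (key (g l)) => //; apply: ltW.
Qed.

Lemma fold_lemma (g s : R -> R) a b e : a < b -> 0 < e ->
 (forall u, a <= u -> u <= b -> {for u, continuous g}) ->
 (forall u, a <= u -> u <= b -> {for u, continuous s}) -> g a = g b ->
 exists u1 u2, [/\ a <= u1, u1 <= b, a <= u2, u2 <= b & u1 != u2] /\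
   g u1 = g u2 /\ `|s u1 - s u2| < e.
Proof.
move=> ab e0 gc sc gab.
have wg : {within `[a, b], continuous g} by apply: (within_itv gc); lra.
have [cM cMi cMmax] := EVT_max (ltW ab) wg.
have [cm cmi cmmin] := EVT_min (ltW ab) wg.
move: cMi cmi; rewrite !in_itv /= => /andP [p1 p2] /andP [p3 p4].
have itvI : forall t, a <= t -> t <= b -> t \in `[a, b].
  by move=> t h1 h2; rewrite in_itv /= h1 h2.
case: (ltrP (g a) (g cM)) => hM.
  have acM : a < cM by rewrite lt_neqAle p1 andbT; apply/eqP => E; move: hM; rewrite E ltxx.
  have cMb : cM < b by rewrite lt_neqAle p2 andbT; apply/eqP => E; move: hM; rewrite E gab ltxx.
  apply: (local_fold acM cMb e0 gc (sc _ (ltW acM) (ltW cMb))).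
  by move=> t h1 h2; apply: cMmax; apply: itvI.
case: (ltrP (g cm) (g a)) => hm.
  have acm : a < cm by rewrite lt_neqAle p3 andbT; apply/eqP => E; move: hm; rewrite E ltxx.
  have cmb : cm < b by rewrite lt_neqAle p4 andbT; apply/eqP => E; move: hm; rewrite E gab ltxx.
  have gc' : forall u, a <= u -> u <= b -> {for u, continuous (fun t => - g t)}.
    by move=> u h1 h2; apply: (@cvgN _ R^o); apply: gc.
  have gm : forall t, a <= t -> t <= b -> - g t <= - g cm.
    by move=> t h1 h2; rewrite lerN2; apply: cmmin; apply: itvI.
  have [u1 [u2 [H1 [H2 H3]]]] := local_fold acm cmb e0 gc' (sc _ (ltW acm) (ltW cmb)) gm.
  by exists u1, u2; split => //; split => //; apply: oppr_inj.
have gconst : forall t, a <= t -> t <= b -> g t = g a.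
  move=> t h1 h2; apply/eqP; rewrite eq_le; apply/andP; split.
    exact: le_trans (cMmax _ (itvI _ h1 h2)) hM.
  exact: le_trans hm (cmmin _ (itvI _ h1 h2)).
have e20 : 0 < e by [].
have [d d0 hd] := cont_eps (sc _ (lexx a) (ltW ab)) e0.
have [u2 [au2 [u2b u2d]]] : exists u2, a < u2 /\ u2 <= b /\ u2 - a < d.
  case: (lerP (a + d/2) b) => h; [exists (a + d/2) | exists b]; lra.
exists a, u2; split; first by apply: mk5; lra.
split; first by rewrite (gconst u2) //; lra.
by apply: hd; rewrite ltr_norml; apply/andP; split; lra.
Qed.
Lemma D_open (eps : R) : open [set p : R * R | - eps < p.1 /\ p.1 < eps].
Proof.
have -> : [set p : R * R | - eps < p.1 /\ p.1 < eps] = fst @^-1` `]-eps, eps[.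
  apply/seteqP; split => p /=; rewrite in_itv /=.
    by case=> -> ->.
  by case/andP.
apply: open_comp; last first. exact: (@interval_open R^o).
move=> x _; exact: cvg_fst.
Qed.

Definition coord (S : topologicalType) (v : R -> S -> S) (h0 : R -> S) (eps : R) (p : S) : R * R :=
  xget (0, 0) [set q : R * R | (- eps < q.1 /\ q.1 < eps) /\ v q.1 (h0 q.2) = p].

Lemma coordK (S : topologicalType) (v : R -> S -> S) (h0 : R -> S) (eps : R)
  (inj : forall p q : R * R, - eps < p.1 /\ p.1 < eps -> - eps < q.1 /\ q.1 < eps ->
     v p.1 (h0 p.2) = v q.1 (h0 q.2) -> p = q) q :
  - eps < q.1 /\ q.1 < eps -> coord v h0 eps (v q.1 (h0 q.2)) = q.
Proof.
move=> Dq; rewrite /coord.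
have [] := @xgetPex _ (0, 0) [set q0 : R * R | (- eps < q0.1 /\ q0.1 < eps) /\ v q0.1 (h0 q0.2) = v q.1 (h0 q.2)].
  by exists q.
move=> D1 E; exact: inj.
Qed.

Lemma coord_cont (S : topologicalType) (v : R -> S -> S) (h0 : R -> S) (eps : R)
  (inj : forall p q : R * R, - eps < p.1 /\ p.1 < eps -> - eps < q.1 /\ q.1 < eps ->
     v p.1 (h0 p.2) = v q.1 (h0 q.2) -> p = q)
  (opn : forall A, open A -> A `<=` [set p : R * R | - eps < p.1 /\ p.1 < eps] ->
     open ((fun p : R * R => v p.1 (h0 p.2)) @` A)) q :
  - eps < q.1 /\ q.1 < eps -> {for v q.1 (h0 q.2), continuous (coord v h0 eps)}.
Proof.
move=> Dq; have E : coord v h0 eps (v q.1 (h0 q.2)) = q := coordK inj Dq.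
move=> N; rewrite E.
rewrite nbhsE; case=> O [oO Oq] ON.
rewrite nbhsE; exists ((fun p : R * R => v p.1 (h0 p.2)) @` (O `&` [set p : R * R | - eps < p.1 /\ p.1 < eps])).
  split; last by exists q.
  by apply: opn; [apply: openI => //; exact: D_open | move=> ? []].
move=> _ [p [Op Dp] <-] /=; apply: ON.
by rewrite (coordK inj Dp).
Qed.

Lemma geom (S : topologicalType) (v : R -> S -> S) (hv : is_flow v) (h0 : R -> S) (eps : R)
  (inj : forall p q : R * R, - eps < p.1 /\ p.1 < eps -> - eps < q.1 /\ q.1 < eps ->
     v p.1 (h0 p.2) = v q.1 (h0 q.2) -> p = q)
  (opn : forall A, open A -> A `<=` [set p : R * R | - eps < p.1 /\ p.1 < eps] ->
     open ((fun p : R * R => v p.1 (h0 p.2)) @` A))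
  (h : R -> S) (hc : continuous h) (epsh : R) (epsh0 : 0 < epsh)
  (injh : forall p q : R * R, - epsh < p.1 /\ p.1 < epsh -> - epsh < q.1 /\ q.1 < epsh ->
     v p.1 (h p.2) = v q.1 (h q.2) -> p = q)
  a b : a < b ->
  (forall u, a <= u -> u <= b -> exists q : R * R, (- eps < q.1 /\ q.1 < eps) /\ v q.1 (h0 q.2) = h u) ->
  (coord v h0 eps (h a)).2 = (coord v h0 eps (h b)).2 -> False.
Proof.
move=> ab inB eqab.
have key : forall u, a <= u -> u <= b ->
   (- eps < (coord v h0 eps (h u)).1 /\ (coord v h0 eps (h u)).1 < eps) /\
   v (coord v h0 eps (h u)).1 (h0 (coord v h0 eps (h u)).2) = h u /\
   {for u, continuous (coord v h0 eps \o h)}.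
  move=> u h1 h2; have [q [Dq hq]] := inB u h1 h2.
  have E : coord v h0 eps (v q.1 (h0 q.2)) = q := coordK inj Dq.
  have C := @coord_cont S v h0 eps inj opn q Dq.
  rewrite -hq E; split => //; split => //.
  apply: continuous_comp; first exact: hc.
  by rewrite -hq.
have gc : forall u, a <= u -> u <= b -> {for u, continuous (fun u => (coord v h0 eps (h u)).2)}.
  move=> u h1 h2; have [_ [_ C]] := key u h1 h2.
  apply: (continuous_comp C); exact: cvg_snd.
have sc : forall u, a <= u -> u <= b -> {for u, continuous (fun u => (coord v h0 eps (h u)).1)}.
  move=> u h1 h2; have [_ [_ C]] := key u h1 h2.
  apply: (continuous_comp C); exact: cvg_fst.
have [u1 [u2 [[p1 p2 p3 p4 ne] [gq sq]]]] := fold_lemma ab epsh0 gc sc eqab.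
have [_ [F1 _]] := key u1 p1 p2.
have [_ [F2 _]] := key u2 p3 p4.
move: F1 F2 gq sq; set q1 := coord v h0 eps (h u1); set q2 := coord v h0 eps (h u2).
move=> F1 F2 gq sq.
have : v (q2.1 - q1.1) (h u1) = v 0 (h u2).
  rewrite flow0 // -F1 flowC // -F2 -gq; congr v; lra.
move=> /(@box_inj S v h epsh injh) []; first by rewrite distrC.
  by rewrite normr0.
by move=> _ E; move: ne; rewrite E eqxx.
Qed.
Lemma tube (S : topologicalType) (hS : hausdorff_space S) (v : R -> S -> S)
  (vc : continuous (fun p : R * S => v p.1 p.2)) (x : S) (d T1 : R) :
  (forall t, d <= t -> t <= T1 -> v t x <> x) ->
  exists W, nbhs x W /\ forall y w t, W y -> W w -> d <= t -> t <= T1 -> v t y <> w.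
Proof.
move=> nper.
have cK : compact `[d, T1] by apply: segment_compact.
have loc : forall t, [set` `[d, T1]] t ->
   \forall t' \near t & i \near nbhs (x, x), v t' i.1 <> i.2.
  move=> t; rewrite /= in_itv /= => /andP [h1 h2].
  have [A [B [nA [nB dis]]]] : exists A B, nbhs (v t x) A /\ nbhs x B /\
       forall z, A z -> B z -> False.
    case: (pselect (exists A B, nbhs (v t x) A /\ nbhs x B /\
       forall z, A z -> B z -> False)) => // H; exfalso.
    apply: (nper t h1 h2); apply: hS => A B nA nB.
    apply: contra_notP H => H'; exists A, B; split => //; split => // z Az Bz.
    by apply: H'; exists z.
  have := vc (t, x) A nA.
  case=> -[Nt Nx] /= [nNt nNx] sub.
  exists (Nt, Nx `*` B) => /=; first split => //.
    by exists (Nx, B).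
  move=> [t' [y w]] /= [Nt' [Nxy Bw]] E.
  apply: (dis w) => //; rewrite -E; exact: (sub (t', y)).
move: cK => /compact_near_coveringP /(_ (S * S)%type (nbhs (x, x))
  (fun i t => v t i.1 <> i.2) _ loc).
case=> -[W1 W2] /= [n1 n2] sub.
exists (W1 `&` W2); split; first exact: filterI.
move=> y w t [y1 y2] [w1 w2] h1 h2.
by apply: (sub (y, w)) => //=; rewrite in_itv /= h1 h2.
Qed.

Theorem mainTheorem6 (S : topologicalType) (hS : surface S)
  (v : R -> S -> S) (hv : is_flow v) (g : set S)
  (hg : circuit_with_wandering_holonomy v g) :
  ~ periodic_orbit v g /\
  exists x, g x /\ nonwandering v x /\ ~ closure (Cl v) x.
Proof.
case: hg => nontriv [x [gx [nsx Hx]]].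
have [h0 [tr0 [_ [[r0 _ hr0] [rev0 [dom0 wand0]]]]]] := Hx setT filterT.
case: tr0 => [[hc0 [hinj0 _]] [eps [eps0]]].
rewrite /= => -[inj opn].
have xF : x = v 0 (h0 r0) by rewrite flow0 // hr0.
have nCl : forall q : R * R, - eps < q.1 /\ q.1 < eps -> ~ Cl v (v q.1 (h0 q.2)).
  move=> q [q1 q2]; apply: (@not_Cl_box S v hv h0 eps eps0 inj wand0).
  by rewrite ltr_norml q1 q2.
have nClx : ~ Cl v x.
  rewrite xF; apply: (nCl (0, r0)) => /=; split; lra.
have xnper : forall t, 0 < t -> v t x <> x.
  by move=> t t0 E; apply: nClx; right; split => //; exists t.
split.
  case=> p [[nsp [T [T0 hT]]] gE].
  have : Defs.orbit v p x by rewrite -gE.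
  case=> t _ xt; apply: (xnper T T0).
  by rewrite -xt flowC // addrC -flowC // hT.
exists x; split => //; split; last first.
  move=> H.
  have nB : nbhs x ((fun p : R * R => v p.1 (h0 p.2)) @` [set p : R * R | - eps < p.1 /\ p.1 < eps]).
    apply: open_nbhs_nbhs; split; first by apply: opn => //; exact: D_open.
    by exists (0, r0) => /=; [split; lra | rewrite -xF].
  have [z [Clz [q Dq qz]]] := H _ nB.
  by apply: (nCl q Dq); rewrite qz.
move=> U nU T.
pose d := eps / 2.
have [T1 [dT1 TT1]] : exists T1, d <= T1 /\ T <= T1.
  by case: (lerP d T) => h; [exists T | exists d]; split => //; lra.
have [W [nW tubeW]] : exists W, nbhs x W /\
    forall y w t, W y -> W w -> d <= t -> t <= T1 -> v t y <> w.
  apply: (tube hS.1 hv.1) => t h1 _; apply: xnper; rewrite /d in h1; lra.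
pose D' := [set p : R * R | - (eps / 4) < p.1 /\ p.1 < eps / 4].
pose W' := (fun p : R * R => v p.1 (h0 p.2)) @` D'.
have nW' : nbhs x W'.
  apply: open_nbhs_nbhs; split.
    apply: opn; first exact: D_open.
    by move=> p [p1 p2]; split; lra.
  by exists (0, r0) => /=; [rewrite /D' /=; split; lra | rewrite -xF].
have [h [tr [sub [_ [_ [[y [z [[a _ ha] [t [t0 [vt [[b _ hb] _]]]]]]] _]]]]]] :=
  Hx (U `&` W `&` W') (filterI (filterI nU nW) nW').
case: tr => [[hc [hinj _]] [epsh [epsh0]]].
rewrite /= => -[injh _].
have Uy : (U `&` W `&` W') y by apply: sub; exists a.
have Uz : (U `&` W `&` W') z by apply: sub; exists b.
have tT1 : T1 < t.
  rewrite ltNge; apply/negP => tle.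
  case: (ltrP t d) => td; last first.
    by apply: (tubeW y z t Uy.1.2 Uz.1.2 td tle).
  case: Uy => _ [[s1 r1] [s1a s1b] yq]; move: s1a s1b yq => /= s1a s1b yq.
  have Dq1 : - eps < (s1, r1).1 /\ (s1, r1).1 < eps by rewrite /=; split; lra.
  have Dq2 : - eps < (t + s1, r1).1 /\ (t + s1, r1).1 < eps.
    by rewrite /=; rewrite /d in td; split; lra.
  have c1 : coord v h0 eps y = (s1, r1) by rewrite -yq (coordK inj Dq1).
  have zq : z = v (t + s1) (h0 r1) by rewrite -vt -yq flowC.
  have c2 : coord v h0 eps z = (t + s1, r1) by rewrite zq (coordK inj Dq2).
  have inB : forall u, a <= u -> u <= b -> exists q : R * R,
      (- eps < q.1 /\ q.1 < eps) /\ v q.1 (h0 q.2) = h u.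
    move=> u _ _; have [_ [q [q1 q2] qE]] : (U `&` W `&` W') (h u) by apply: sub; exists u.
    by exists q; split => //; move: q1 q2 => /= q1 q2; split; lra.
  have inB' : forall u, b <= u -> u <= a -> exists q : R * R,
      (- eps < q.1 /\ q.1 < eps) /\ v q.1 (h0 q.2) = h u.
    move=> u _ _; have [_ [q [q1 q2] qE]] : (U `&` W `&` W') (h u) by apply: sub; exists u.
    by exists q; split => //; move: q1 q2 => /= q1 q2; split; lra.
  case: (ltgtP a b) => ab.
  - apply: (geom hv inj opn hc epsh0 injh ab inB).
    by rewrite ha hb c1 c2.
  - apply: (geom hv inj opn hc epsh0 injh ab inB').
    by rewrite ha hb c1 c2.
  - have : (s1, r1) = (t + s1, r1).
      apply: inj => //=; rewrite -zq yq -ha -hb ab //.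
    case=> E; have := congr1 (fun u => u - s1) E; rewrite /= addrK subrr => t0'.
    by move: t0; rewrite -t0' ltxx.
exists t; split; first lra.
exists y; split; first exact: Uy.1.1.
by rewrite vt; exact: Uz.1.1.
Qed.
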